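(* Let $r\ge 1$, let $\sigma_1\ge\sigma_2\ge\cdots\ge\sigma_r>0$ be real numbers and $c_1,\ldots,c_r\in\mathbb{C}$, and define the rational function $$\psi(\nu)=\sum_{i=1}^r \frac{|c_i|^2}{(\sigma_i^2+\nu)^2}=\sum_{i=1}^r \frac{|c_i|^2}{(\delta_i-\nu)^2},\qquad \delta_i=-\sigma_i^2,$$ so that $\delta_1\le\cdots\le\delta_r<0$. Assume that the poles of $\psi$ are not all identical, i.e. there exist indices $i,j$ with $c_i\neq 0$, $c_j\neq 0$ and $\delta_i\neq\delta_j$. Let $\nu^{(l)}\ge 0$ and define $$\alpha=\frac{4\big(\psi(\nu^{(l)})\big)^3}{\big(\psi'(\nu^{(l)})\big)^2},\qquad \beta=\nu^{(l)}+\frac{2\psi(\nu^{(l)})}{\psi'(\nu^{(l)})},\qquad F(\nu;\alpha,\beta)=\frac{\alpha}{(\beta-\nu)^2},$$ so that $F(\nu^{(l)};\alpha,\beta)=\psi(\nu^{(l)})$ and $F'(\nu^{(l)};\alpha,\beta)=\psi'(\nu^{(l)})$. Then $F(\nu;\alpha,\beta)<\psi(\nu)$ for all real $\nu>\delta_r$ with $\nu\neq\nu^{(l)}$.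
   Context: $\psi'$ denotes the derivative of $\psi$ with respect to the real variable $\nu$. In the paper, $\nu^{(l)}$ is the current iterate of an iterative root-finding method for $\psi(\nu)=1$ on $[0,\infty)$, hence $\nu^{(l)}\ge 0$. *)

(* Defs.v *)
From Stdlib Require Import Reals.
From Coquelicot Require Import Coquelicot.
Open Scope R_scope.

(* Indices are 0-based: i = 0, ..., r-1 correspond to the paper's 1, ..., r.
   psi r sigma c nu = sum_{i<r} |c_i|^2 / (sigma_i^2 + nu)^2 *)
Definition psi (r : nat) (sigma : nat -> R) (c : nat -> C) (nu : R) : R :=
  sum_n (fun i => (Cmod (c i)) ^ 2 / (sigma i ^ 2 + nu) ^ 2) (r - 1)%nat.

Definition delta (sigma : nat -> R) (i : nat) : R := - (sigma i ^ 2).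

Definition F (alpha beta nu : R) : R := alpha / (beta - nu) ^ 2.

(* Main.v *)
Require Import Defs.
From Stdlib Require Import Reals Lra Lia.
From Coquelicot Require Import Coquelicot.
Open Scope R_scope.

Lemma sum_strict (f g : nat -> R) (N : nat) :
  (forall i, (i <= N)%nat -> f i <= g i) ->
  (exists k, (k <= N)%nat /\ f k < g k) ->
  sum_f_R0 f N < sum_f_R0 g N.
Proof.
  induction N as [|N IH]; intros Hle [k [Hk Hs]].
  - simpl. assert (k = 0%nat) by lia. subst. exact Hs.
  - simpl. destruct (Nat.eq_dec k (S N)) as [->|Hne].
    + assert (sum_f_R0 f N <= sum_f_R0 g N) by (apply sum_Rle; intros; apply Hle; lia). lra.
    + assert (sum_f_R0 f N < sum_f_R0 g N).
      { apply IH. intros; apply Hle; lia. exists k; split; [lia|exact Hs]. }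
      assert (f (S N) <= g (S N)) by (apply Hle; lia). lra.
Qed.

Lemma sum_pos (f : nat -> R) (N : nat) :
  (forall i, (i <= N)%nat -> 0 <= f i) ->
  (exists k, (k <= N)%nat /\ 0 < f k) -> 0 < sum_f_R0 f N.
Proof.
  intros H1 H2. rewrite <- (Rmult_0_l (INR (S N))), <- sum_cte.
  apply sum_strict; auto.
Qed.

Lemma sum_derive (f f' : nat -> R -> R) (x : R) (N : nat) :
  (forall i, (i <= N)%nat -> is_derive (f i) x (f' i x)) ->
  is_derive (fun y => sum_f_R0 (fun i => f i y) N) x (sum_f_R0 (fun i => f' i x) N).
Proof.
  induction N as [|N IH]; intros H.
  - simpl. apply H. lia.
  - simpl. apply (is_derive_plus (fun y => sum_f_R0 (fun i => f i y) N) (f (S N))).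
    apply IH; intros; apply H; lia. apply H; lia.
Qed.

Lemma term_derive (a s x : R) : s + x <> 0 ->
  is_derive (fun y => a / (s + y) ^ 2) x (-2 * (a / (s + x) ^ 3)).
Proof.
  intros H. auto_derive. simpl. intro. apply H. nra.
  field. auto.
Qed.

Lemma term_ineq (a y z l : R) : 0 <= a -> 0 < y -> 0 < z -> 0 < l ->
  3 * (a / z ^ 2) <= l ^ 2 * (a / y ^ 2) + 2 / l * (a * y / z ^ 3) /\
  (0 < a -> y <> l * z -> 3 * (a / z ^ 2) < l ^ 2 * (a / y ^ 2) + 2 / l * (a * y / z ^ 3)).
Proof.
  intros Ha Hy Hz Hl.
  assert (E : l ^ 2 * (a / y ^ 2) + 2 / l * (a * y / z ^ 3) - 3 * (a / z ^ 2)
     = a * ((y - l * z) ^ 2 * (2 * y + l * z)) / (l * z ^ 3 * y ^ 2)).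
  { field. lra. }
  assert (D : 0 < l * z ^ 3 * y ^ 2) by (apply Rmult_lt_0_compat; [apply Rmult_lt_0_compat|]; try apply pow_lt; lra).
  split.
  - assert (0 <= a * ((y - l * z) ^ 2 * (2 * y + l * z)) / (l * z ^ 3 * y ^ 2)).
    { apply Rmult_le_pos; [|left; apply Rinv_0_lt_compat; lra].
      apply Rmult_le_pos; auto. apply Rmult_le_pos. apply pow2_ge_0. nra. }
    lra.
  - intros Ha' Hne.
    assert (0 < a * ((y - l * z) ^ 2 * (2 * y + l * z)) / (l * z ^ 3 * y ^ 2)).
    { apply Rmult_lt_0_compat; [|apply Rinv_0_lt_compat; lra].
      apply Rmult_lt_0_compat; auto. apply Rmult_lt_0_compat.
      assert (y - l * z <> 0) by lra. apply pow2_gt_0; auto. nra. }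
    lra.
Qed.

Lemma sum_scal_l (f : nat -> R) (x : R) (N : nat) :
  sum_f_R0 (fun k => x * f k) N = x * sum_f_R0 f N.
Proof. rewrite scal_sum. apply sum_eq. intros; ring. Qed.

Theorem theorem1 (r : nat) (sigma : nat -> R) (c : nat -> C) (nul : R) :
  (1 <= r)%nat ->
  (forall i j : nat, (i <= j)%nat -> (j < r)%nat -> sigma j <= sigma i) ->
  0 < sigma (r - 1)%nat ->
  (exists i j : nat, (i < r)%nat /\ (j < r)%nat /\ c i <> 0%C /\ c j <> 0%C /\
                     delta sigma i <> delta sigma j) ->
  0 <= nul ->
  let alpha := 4 * (psi r sigma c nul) ^ 3 / (Derive (psi r sigma c) nul) ^ 2 in
  let beta := nul + 2 * psi r sigma c nul / Derive (psi r sigma c) nul in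
  forall nu : R, delta sigma (r - 1)%nat < nu -> nu <> nul ->
    F alpha beta nu < psi r sigma c nu.
Proof.
  intros Hr Hmono Hpos [i [j [Hi [Hj [Hci [Hcj Hd]]]]]] Hnul alpha beta nu Hnu Hne.
  unfold delta in Hnu, Hd.
  set (n := (r - 1)%nat) in *.
  set (a := fun k => Cmod (c k) ^ 2).
  set (s := fun k => sigma k ^ 2).
  assert (Hs : forall k, (k <= n)%nat -> sigma n ^ 2 <= s k).
  { intros k Hk. unfold s. assert (sigma n <= sigma k) by (apply Hmono; lia).
    simpl. nra. }
  assert (Hz : forall k, (k <= n)%nat -> 0 < s k + nul).
  { intros k Hk. specialize (Hs k Hk). assert (0 < sigma n ^ 2) by (apply pow_lt; lra). lra. }
  assert (Hy : forall k, (k <= n)%nat -> 0 < s k + nu).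
  { intros k Hk. specialize (Hs k Hk). lra. }
  assert (Ha : forall k, 0 <= a k) by (intros; unfold a; apply pow2_ge_0).
  assert (Hai : 0 < a i).
  { unfold a. apply pow2_gt_0. intro H. apply Hci, Cmod_eq_0, H. }
  assert (Haj : 0 < a j).
  { unfold a. apply pow2_gt_0. intro H. apply Hcj, Cmod_eq_0, H. }
  assert (Hin : (i <= n)%nat) by lia.
  assert (Hjn : (j <= n)%nat) by lia.
  assert (Hpsi : forall x, psi r sigma c x = sum_f_R0 (fun k => a k / (s k + x) ^ 2) n).
  { intros x. unfold psi. rewrite sum_n_Reals. reflexivity. }
  set (Q := sum_f_R0 (fun k => a k / (s k + nul) ^ 3) n).
  set (P := sum_f_R0 (fun k => a k / (s k + nul) ^ 2) n).
  set (A := sum_f_R0 (fun k => a k / (s k + nu) ^ 2) n).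
  set (B := sum_f_R0 (fun k => a k * (s k + nu) / (s k + nul) ^ 3) n).
  assert (Hder : Derive (psi r sigma c) nul = -2 * Q).
  { apply is_derive_unique.
    apply is_derive_ext with (f := fun y => sum_f_R0 (fun k => (fun k y => a k / (s k + y) ^ 2) k y) n).
    { intros; symmetry; apply Hpsi. }
    unfold Q. rewrite <- sum_scal_l.
    apply (sum_derive (fun k y => a k / (s k + y) ^ 2) (fun k y => -2 * (a k / (s k + y) ^ 3))).
    intros k Hk. apply term_derive. specialize (Hz k Hk). lra. }
  assert (HQ : 0 < Q).
  { apply sum_pos. intros k Hk. specialize (Hz k Hk).
    apply Rmult_le_pos; auto. left; apply Rinv_0_lt_compat, pow_lt; lra.
    exists i; split; auto. specialize (Hz i Hin).
    apply Rmult_lt_0_compat; auto. apply Rinv_0_lt_compat, pow_lt; lra. }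
  assert (HP : 0 < P).
  { apply sum_pos. intros k Hk. specialize (Hz k Hk).
    apply Rmult_le_pos; auto. left; apply Rinv_0_lt_compat, pow_lt; lra.
    exists i; split; auto. specialize (Hz i Hin).
    apply Rmult_lt_0_compat; auto. apply Rinv_0_lt_compat, pow_lt; lra. }
  assert (HB : 0 < B).
  { apply sum_pos. intros k Hk. specialize (Hz k Hk). specialize (Hy k Hk).
    apply Rmult_le_pos; auto. apply Rmult_le_pos; auto; lra.
    left; apply Rinv_0_lt_compat, pow_lt; lra.
    exists i; split; auto. specialize (Hz i Hin). specialize (Hy i Hin).
    apply Rmult_lt_0_compat; auto. apply Rmult_lt_0_compat; lra.
    apply Rinv_0_lt_compat, pow_lt; lra. }
  assert (HBe : B = P + Q * (nu - nul)).
  { rewrite (Rmult_comm Q). unfold B, P, Q. rewrite <- sum_scal_l, <- plus_sum.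
    apply sum_eq. intros k Hk. specialize (Hz k Hk). field. lra. }
  set (l := B / P).
  assert (Hl : 0 < l) by (unfold l; apply Rdiv_lt_0_compat; auto).
  assert (Hmain : 3 * P < l ^ 2 * A + 2 / l * B).
  { unfold P, A, B. rewrite <- !sum_scal_l, <- plus_sum.
    apply sum_strict.
    - intros k Hk. apply term_ineq; auto.
    - destruct (Req_dec (s i + nu) (l * (s i + nul))) as [Ei|Ei].
      + destruct (Req_dec (s j + nu) (l * (s j + nul))) as [Ej|Ej].
        * exfalso.
          assert (E : (l - 1) * (s i - s j) = 0) by lra.
          destruct (Rmult_integral _ _ E) as [E1|E1].
          -- apply Hne. assert (Hl1 : l = 1) by lra. rewrite Hl1 in Ei. lra.
          -- apply Hd. unfold s in E1. lra.
        * exists j; split; auto. apply term_ineq; auto.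
      + exists i; split; auto. apply term_ineq; auto. }
  assert (Hineq : P ^ 3 < A * B ^ 2).
  { unfold l in Hmain.
    replace ((B / P) ^ 2 * A + 2 / (B / P) * B) with (A * B ^ 2 / P ^ 2 + 2 * P) in Hmain
      by (field; lra).
    assert (P < A * B ^ 2 / P ^ 2) by lra.
    assert (0 < P ^ 2) by (apply pow_lt; lra).
    apply (Rmult_lt_compat_r (P ^ 2)) in H; auto.
    replace (A * B ^ 2 / P ^ 2 * P ^ 2) with (A * B ^ 2) in H by (field; lra).
    replace (P ^ 3) with (P * P ^ 2) by ring. exact H. }
  unfold F, alpha, beta. rewrite Hder, !Hpsi. fold P A.
  replace (4 * P ^ 3 / (-2 * Q) ^ 2 / (nul + 2 * P / (-2 * Q) - nu) ^ 2) with (P ^ 3 / B ^ 2).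
  2:{ rewrite HBe. field. split; [|lra]. replace (P + Q * (nu - nul)) with B by (rewrite HBe; ring). lra. }
  assert (0 < B ^ 2) by (apply pow_lt; lra).
  apply (Rmult_lt_reg_r (B ^ 2)); auto.
  replace (P ^ 3 / B ^ 2 * B ^ 2) with (P ^ 3) by (field; lra). lra.
Qed.
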